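(* Let $\mathcal B$ be the category of complete lattices and monotone (not necessarily join-preserving) maps, and let $\mathcal E$ be the category whose objects are pointed complete lattices $(X,x_0)$ and whose morphisms $f:(X,x_0)\to(Y,y_0)$ are monotone maps $f:X\to Y$ with $f(x_0)\le y_0$, concrete over $\mathcal B$ via the forgetful functor. Then $\mathcal E$ is cofibred over $\mathcal B$, every fibre $\mathcal E_X$ is a complete lattice (isomorphic to $X$), but the $\mathcal Q_{\mathcal B}$-category $\overline{\mathcal E}$ is not tensored.
   Context: For a concrete category $|\text{-}|:\mathcal E\to\mathcal B$ (faithful functor), a map $f:|X|\to|Y|$ is an $\mathcal E$-morphism if it is $|f'|$ for some $f':X\to Y$; $\overline{\mathcal E}(X,Y)$ is the set of these. $\mathcal E$ is cofibred if for every $X$ and map $f:|X|\to T$ there is $f\star X$ with $|f\star X|=T$ such that $g:T\to|Z|$ is an $\mathcal E$-morphism $f\star X\to Z$ iff $g\circ f$ is an $\mathcal E$-morphism $X\to Z$. The fibre $\mathcal E_T$ is the class of objects $Y$ with $|Y|=T$, preordered by $Y\le Y'$ iff $1_T$ is an $\mathcal E$-morphism $Y\to Y'$. For $\mathbf f\subseteq\mathcal B(S,T)$, $\mathbf h\subseteq\mathcal B(S,U)$ put $\mathbf h\swarrow\mathbf f=\{g\in\mathcal B(T,U)\mid\forall f\in\mathbf f:g\circ f\in\mathbf h\}$. $\overline{\mathcal E}$ is tensored if for every $X\in\mathrm{ob}\,\mathcal E$ and every subset $\mathbf u\subseteq\mathcal B(|X|,T)$ there is $Y$ with $|Y|=T$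 and $\overline{\mathcal E}(Y,Z)=\overline{\mathcal E}(X,Z)\swarrow\mathbf u$ for all $Z$. *)

(* Defs.v *)
Set Implicit Arguments.

Record CLat := {
  car :> Type;
  le : car -> car -> Prop;
  le_refl : forall x, le x x;
  le_trans : forall x y z, le x y -> le y z -> le x z;
  le_antisym : forall x y, le x y -> le y x -> x = y;
  sup : (car -> Prop) -> car;
  sup_ub : forall (P : car -> Prop) x, P x -> le x (sup P);
  sup_lub : forall (P : car -> Prop) y, (forall x, P x -> le x y) -> le (sup P) y
}.
Arguments le {c} _ _.
Arguments sup {c} _.

Definition monotone {X Y : CLat} (f : X -> Y) : Prop :=
  forall x x', le x x' -> le (f x) (f x').

Definition Bhom (X Y : CLat) := { f : X -> Y | monotone f }.

Record PCLat := mkP { base : CLat; pt : car base }.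

(* Ebar(X,Y): the maps |X| -> |Y| that underlie an E-morphism, i.e.
   monotone maps f with f x0 <= y0. *)
Definition Ebar (X Y : PCLat) (f : base X -> base Y) : Prop :=
  monotone f /\ le (f (pt X)) (pt Y).

(* E is cofibred over B.  An object over T is a pointed lattice (T, t),
   so f * X is given by a point t of T. *)
Definition E_cofibred : Prop :=
  forall (X : PCLat) (T : CLat) (f : Bhom (base X) T),
    exists t : car T,
      forall (Z : PCLat) (g : Bhom T (base Z)),
        Ebar (mkP T t) Z (proj1_sig g) <->
        Ebar X Z (fun x => proj1_sig g (proj1_sig f x)).

(* Fibre E_T: objects over T (identified with points of T), preordered by
   y <= y' iff 1_T is an E-morphism (T,y) -> (T,y'). *)
Definition fibre_le (T : CLat) (y y' : car T) : Prop :=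
  Ebar (mkP T y) (mkP T y') (fun x => x).

Definition fibre_complete_iso_to (T : CLat) : Prop :=
  (forall y, fibre_le T y y) /\
  (forall y y' y'', fibre_le T y y' -> fibre_le T y' y'' -> fibre_le T y y'') /\
  (forall y y', fibre_le T y y' -> fibre_le T y' y -> y = y') /\
  (forall P : car T -> Prop, exists s : car T,
      (forall y, P y -> fibre_le T y s) /\
      (forall b, (forall y, P y -> fibre_le T y b) -> fibre_le T s b)) /\
  (exists (phi : car T -> car T) (psi : car T -> car T),
      (forall y, psi (phi y) = y) /\ (forall y, phi (psi y) = y) /\
      (forall y y', fibre_le T y y' <-> le (phi y) (phi y'))).

(* Ebar is tensored: for every X and every u ⊆ B(|X|,T) there is Y over T
   with Ebar(Y,Z) = Ebar(X,Z) ↙ u for all Z (equality of subsets of B(T,|Z|)). *)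
Definition Ebar_tensored : Prop :=
  forall (X : PCLat) (T : CLat) (u : Bhom (base X) T -> Prop),
    exists y : car T,
      forall (Z : PCLat) (g : Bhom T (base Z)),
        Ebar (mkP T y) Z (proj1_sig g) <->
        (forall f : Bhom (base X) T, u f ->
           Ebar X Z (fun x => proj1_sig g (proj1_sig f x))).

(* Main.v *)
Require Import Defs.
From Stdlib Require Import PropExtensionality.

Definition PLat : CLat.
Proof.
  refine (@Build_CLat Prop (fun p q => p -> q) _ _ _ (fun P => exists p, P p /\ p) _ _).
  - auto.
  - auto.
  - intros; apply propositional_extensionality; tauto.
  - intros P x Hx Hx'; exists x; auto.
  - intros P y H [p [Hp Hp']]; exact (H p Hp Hp').
Defined.

Definition PPLat : CLat.
Proof.
  refine (@Build_CLat (Prop * Prop)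
    (fun x y => (fst x -> fst y) /\ (snd x -> snd y)) _ _ _
    (fun P => (exists x, P x /\ fst x, exists x, P x /\ snd x)) _ _).
  - tauto.
  - intros x y z [] []; split; auto.
  - intros [a b] [c d] [H1 H2] [H3 H4]; simpl in *.
    f_equal; apply propositional_extensionality; tauto.
  - intros P x Hx; simpl; split; intro; eexists; eauto.
  - intros P y H; simpl; split; intros [x [Hx Hx']]; apply (H x Hx); auto.
Defined.

Lemma mono_const (X Y : CLat) (c : car Y) : monotone (fun _ : car X => c).
Proof. intros x x' _; apply le_refl. Qed.

Theorem mainTheorem4 :
  E_cofibred /\
  (forall T : CLat, fibre_complete_iso_to T) /\
  ~ Ebar_tensored.
Proof.
  split; [|split].
  - intros X T [f Hf]. exists (f (pt X)). intros Z [g Hg]; simpl.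
    unfold Ebar; simpl; split; intros [_ H]; split; auto.
    intros x x' Hxx'; apply Hg, Hf, Hxx'.
  - intros T. unfold fibre_complete_iso_to, fibre_le, Ebar; simpl.
    assert (Hm : monotone (fun x : car T => x)) by (intros x x' H; exact H).
    split; [|split; [|split; [|split]]].
    + intros y; split; auto; apply le_refl.
    + intros y y' y'' [_ H1] [_ H2]; split; auto; eapply le_trans; eauto.
    + intros y y' [_ H1] [_ H2]; apply le_antisym; auto.
    + intros P; exists (sup P); split.
      * intros y Hy; split; auto; apply sup_ub; auto.
      * intros b Hb; split; auto; apply sup_lub; intros; apply Hb; auto.
    + exists (fun x => x), (fun x => x); split; [|split]; auto.
      intros y y'; split; [intros [_ H]; exact H | intros H; split; auto].
  - intros Hten.
    set (a := (True, False) : car PPLat).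
    set (b := (False, True) : car PPLat).
    set (X := mkP PPLat a).
    destruct (Hten X PPLat (fun f => (forall x, proj1_sig f x = a) \/ (forall x, proj1_sig f x = b)))
      as [y Hy].
    assert (Hid : monotone (fun x : car PPLat => x)) by (intros x x' H; exact H).
    pose proof (proj1 (Hy (mkP PPLat y) (exist _ _ Hid))) as H1.
    assert (Ha : Ebar (mkP PPLat y) (mkP PPLat y) (fun x => x)) by
      (split; [exact Hid | apply le_refl]).
    specialize (H1 Ha).
    destruct (H1 (exist _ _ (mono_const PPLat PPLat a)) (or_introl (fun _ => eq_refl))) as [_ Hya].
    destruct (H1 (exist _ _ (mono_const PPLat PPLat b)) (or_intror (fun _ => eq_refl))) as [_ Hyb].
    simpl in Hya, Hyb.
    assert (Hand : @monotone PPLat PLat (fun x => fst x /\ snd x)).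
    { intros x x' [H3 H4]; simpl; tauto. }
    pose proof (proj2 (Hy (mkP PLat False) (exist _ _ Hand))) as H2.
    assert (HR : forall f : Bhom (base X) PPLat,
        (forall x, proj1_sig f x = a) \/ (forall x, proj1_sig f x = b) ->
        Ebar X (mkP PLat False) (fun x => (fun x => fst x /\ snd x) (proj1_sig f x))).
    { intros [f Hf] Hu; split.
      - intros x x' Hxx'; apply Hand, Hf, Hxx'.
      - simpl in *; destruct Hu as [Hu|Hu]; rewrite Hu; simpl; tauto. }
    destruct (H2 HR) as [_ Hc]. simpl in Hc.
    destruct Hya as [Hya _]; destruct Hyb as [_ Hyb]; simpl in *.
    apply Hc; split; auto.
Qed.
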